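(* Let $G$ be a graph of maximum degree at most $3$, and let $S\subseteq V(G)$. If $u$ is a vertex of degree at most $2$ in $G$, then $w_{(G,S)}(u)\leq 2$. Moreover, $w_{(G,S)}(u)=2$ if and only if $u$ is contained in a subgraph $T$ of $G$ that is a tree such that rooting $T$ in $u$ yields a full binary tree and $S\cap V(T)$ is exactly the set of leaves of $T$.
   Context: All graphs are finite, simple and undirected. For a graph $G$, a set $S\subseteq V(G)$, and vertices $u,v$ with $u\in S$ or $v\in S$, ${\rm dist}_{(G,S)}(u,v)$ is the minimum number of edges of a path $P$ in $G$ between $u$ and $v$ such that $S$ contains exactly one endvertex of $P$ and no internal vertex of $P$, and ${\rm dist}_{(G,S)}(u,v)=\infty$ if no such path exists (so ${\rm dist}_{(G,S)}(u,u)=0$ for $u\in S$, and ${\rm dist}_{(G,S)}(u,v)=\infty$ for distinct $u,v\in S$). For $u\in V(G)$, $w_{(G,S)}(u)=\sum_{v\in S}(1/2)^{{\rm dist}_{(G,S)}(u,v)-1}$, where $(1/2)^{\infty}=0$. A rooted tree is a full binary tree if every non-leaf vertex has exactly two children; a leaf of a rooted tree is a vertex with no children. *)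

(* Defs.v *)
From HB Require Import structures.
From mathcomp Require Import all_boot all_order all_algebra.
Set Implicit Arguments. Unset Strict Implicit. Unset Printing Implicit Defensive.
Import Order.TTheory GRing.Theory Num.Theory.

(* A finite simple graph is given by a vertex type T : finType and a
   symmetric irreflexive adjacency relation e : rel T. *)

Section Defs.
Variable T : finType.
Variable e : rel T.

Definition deg (x : T) : nat := #|[set y | e x y]|.

(* A path P from u to v is encoded by its vertex list u :: q
   (so its number of edges is size q). *)
Definition Spath (S : {set T}) (u v : T) (q : seq T) : bool :=
  [&& path e u q, last u q == v, uniq (u :: q),
      #|[set u; v] :&: S| == 1 &
      all (fun x => x \notin S) (take (size q).-1 q)].

Definition has_Spath (S : {set T}) (u v : T) (k : nat) : bool :=
  [exists q : k.-tuple T, Spath S u v q].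

(* dist_(G,S)(u,v) : Some d for a finite distance d, None for infinity.
   Simple paths have fewer than #|T| edges, so searching the lengths
   0 .. #|T| finds the minimum whenever an S-path exists. *)
Definition distS (S : {set T}) (u v : T) : option nat :=
  let d := find (has_Spath S u v) (iota 0 #|T|.+1) in
  if d <= #|T| then Some d else None.

Definition wterm (S : {set T}) (u v : T) : rat :=
  match distS S u v with
  | Some d => (2%:R^-1 : rat) ^ (d%:Z - 1)
  | None => 0
  end.

Definition weight (S : {set T}) (u : T) : rat := (\sum_(v in S) wterm S u v)%R.

Inductive btree : Type :=
| BLeaf of T
| BNode of T & btree & btree.

Definition broot (t : btree) : T :=
  match t with BLeaf x => x | BNode x _ _ => x end.

Fixpoint blabels (t : btree) : seq T :=
  match t with
  | BLeaf x => [:: x]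
  | BNode x l r => x :: (blabels l ++ blabels r)
  end.

Fixpoint bleaves (t : btree) : seq T :=
  match t with
  | BLeaf x => [:: x]
  | BNode _ l r => bleaves l ++ bleaves r
  end.

Fixpoint bwf (t : btree) : bool :=
  match t with
  | BLeaf _ => true
  | BNode x l r => [&& e x (broot l), e x (broot r), bwf l & bwf r]
  end.

(* t (with injective labelling) is a subgraph of G that is a tree, rooted
   at u it is a full binary tree, and S meets its vertex set exactly in its
   set of leaves. *)
Definition full_binary_subtree_at (S : {set T}) (u : T) (t : btree) : Prop :=
  [/\ broot t = u, bwf t, uniq (blabels t) &
      [set x in blabels t] :&: S = [set x in bleaves t]].

End Defs.

(* Main.v *)
Require Import Defs.
From HB Require Import structures.
From mathcomp Require Import all_boot all_order all_algebra.
From mathcomp Require Import lra zify.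
From Stdlib Require Import Lia.
Import Order.TTheory GRing.Theory Num.Theory.
Set Implicit Arguments. Unset Strict Implicit. Unset Printing Implicit Defensive.

Section Gen.
Variable T : finType.

Lemma take_belast (y : T) s : take (size s) (y :: s) = belast y s.
Proof. by elim: s y => [|z s IH] y //=; rewrite IH. Qed.

Lemma belast_last_neq (x z : T) s : uniq (x :: s) -> z \in belast x s -> z != last x s.
Proof.
rewrite lastI rcons_uniq => /andP[Hn _] Hz; apply/eqP => E; by rewrite -E Hz in Hn.
Qed.

Lemma in_belast (x z : T) s : z \in x :: s -> z != last x s -> z \in belast x s.
Proof. by rewrite lastI mem_rcons in_cons => /orP[/eqP->|//]; rewrite eqxx. Qed.

Lemma take_in_belast (a z : T) s : z \in take (size s).-1 s -> z \in belast a s.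
Proof. case: s => [|y s] //=; by rewrite take_belast in_cons => ->; rewrite orbT. Qed.

Variable e : rel T.
Variable S : {set T}.

Lemma Spath_dist u v q : Spath e S u v q ->
  exists2 d, distS e S u v = Some d & (d <= size q)%N.
Proof.
move=> Hsp.
have Hu : uniq (u :: q) by case/and5P: Hsp.
have Hsz : (size q < #|T|)%N.
  have := card_uniqP Hu; rewrite /= => <-. by apply: max_card.
have Hh : has_Spath e S u v (size q) by apply/existsP; exists (in_tuple q).
set s := iota 0 #|T|.+1.
have Hf : (find (has_Spath e S u v) s <= size q)%N.
  rewrite leqNgt; apply/negP => Hlt.
  have := before_find 0 Hlt; rewrite nth_iota ?add0n ?Hh //; lia.
exists (find (has_Spath e S u v) s) => //.
rewrite /distS -/s. have -> : (find (has_Spath e S u v) s <= #|T|)%N by lia. done.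
Qed.

Lemma dist_Spath u v d : distS e S u v = Some d ->
  exists q, Spath e S u v q /\ size q = d.
Proof.
rewrite /distS; set s := iota 0 #|T|.+1.
case: ifP => // Hle [<-].
have Hlt : (find (has_Spath e S u v) s < size s)%N by rewrite size_iota.
have Hhas : has (has_Spath e S u v) s by rewrite has_find.
have := nth_find 0 Hhas; rewrite nth_iota ?add0n; last by rewrite -(size_iota 0 #|T|.+1).
by case/existsP => q Hq; exists q; rewrite size_tuple.
Qed.

Lemma dist_None u v : distS e S u v = None -> forall q, ~~ Spath e S u v q.
Proof.
move=> H q; apply/negP => /Spath_dist [d]; by rewrite H.
Qed.

Lemma walk_dist a q v : path e a q -> last a q = v -> v \in S ->
  all (fun z => z \notin S) (belast a q) ->
  exists2 d, distS e S a v = Some d & (d <= size q)%N.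
Proof.
move=> Hp Ev Hv /allP Hall.
have Ev0 := Ev.
rewrite -Ev; move: Ev; case: (shortenP Hp) => p' Hp' Hu Hsub Ev.
have Hsz : (size p' <= size q)%N.
  apply: uniq_leq_size => //; by case/andP: Hu.
suff Hs : Spath e S a (last a p') p'.
  case: (Spath_dist Hs) => d Hd Hd2; exists d => //; exact: leq_trans Hd2 Hsz.
apply/and5P; split => //.
- have Hv' : last a p' \in S by rewrite Ev.
  case: (eqVneq a (last a p')) => Ha.
    rewrite -Ha setUid; have -> : [set a] :&: S = [set a] by apply/setIidPl; rewrite sub1set {1}Ha.
    by rewrite cards1.
  have Has : a \notin S.
    apply: Hall; case: q Hsub Hsz Ha {Ev Hp Ev0} => [|y q] /= Hsub Hsz Ha.
      move: Ha; case: p' Hsub {Hp' Hu Hsz Hv'} => [|y p'] Hsub /=; first by rewrite eqxx.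
      by have := Hsub y (mem_head _ _).
    by rewrite in_cons eqxx.
  have -> : [set a; last a p'] :&: S = [set last a p'].
    apply/setP => z; rewrite !inE; case: (eqVneq z a) => [->|_] /=.
      by rewrite (negbTE Has) (negbTE Ha).
    by case: eqP => [->|]; rewrite ?Hv' ?andbT ?andbF.
  by rewrite cards1.
- apply/allP => z Hz.
  have Hzb : z \in belast a p'.
    exact: take_in_belast.
  apply: Hall; apply: in_belast.
    have := mem_belast Hzb; rewrite !in_cons => /orP[->//|/Hsub ->]; by rewrite orbT.
  by rewrite Ev0 -Ev; apply: belast_last_neq Hu Hzb.
Qed.

Lemma Spath_walk y v q : Spath e S y v q -> v \in S ->
  [/\ path e y q, last y q = v & all (fun z => z \notin S) (belast y q)].
Proof.
case/and5P => Hp /eqP Hl Hu Hc Hall Hv; split => //.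
case: q Hp Hl Hu Hc Hall => [|z s] //= Hp Hl Hu Hc Hall.
rewrite -take_belast; apply/andP; split => //.
apply/negP => Hy.
have Hyv : y != v.
  apply/eqP => E; rewrite -E in Hl; move: Hu => /= /andP[Hn _].
  by rewrite -Hl mem_last in Hn.
have : [set y; v] :&: S = [set y; v].
  by apply/setIidPl; apply/subsetP => w; rewrite !inE => /orP[]/eqP->.
by move=> E; move: Hc; rewrite E cards2 Hyv.
Qed.

End Gen.

Definition h : rat := (2%:R^-1)%R.

Lemma h_ge0 : (0 <= h)%R. Proof. by rewrite /h. Qed.
Lemma h_le1 : (h <= 1)%R. Proof. by rewrite /h. Qed.

Lemma pw d : ((2%:R^-1 : rat) ^ (d%:Z - 1) = 2 * h ^+ d)%R.
Proof.
rewrite expfzDr // exprN1 invrK mulrC //.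
Qed.

Lemma wtermE (T : finType) (e : rel T) S u v : wterm e S u v =
  match distS e S u v with Some d => (2 * h ^+ d)%R | None => 0%R end.
Proof. by rewrite /wterm; case: distS => // d; rewrite pw. Qed.

Lemma wterm_ge0 (T : finType) (e : rel T) S u v : (0 <= wterm e S u v)%R.
Proof. rewrite wtermE; case: distS => // d; apply: mulr_ge0 => //; exact: exprn_ge0. Qed.

Lemma hX_le m n : (m <= n)%N -> (h ^+ n <= h ^+ m)%R.
Proof. by move=> H; apply: ler_wiXn2l => //; rewrite /h. Qed.

Section Trees.
Variable T : finType.

Fixpoint internals (t : btree T) : seq T :=
  match t with BLeaf _ => [::] | BNode x l r => x :: (internals l ++ internals r) end.

Lemma perm_labels t : perm_eq (blabels t) (internals t ++ bleaves t).
Proof.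
elim: t => [x|x l IHl r IHr] //=.
rewrite perm_cons perm_sym perm_catACA perm_sym; exact: perm_cat.
Qed.

Lemma broot_in (t : btree T) : broot t \in blabels t.
Proof. by case: t => [x|x l r] /=; rewrite mem_head. Qed.

Definition okS (S : {set T}) t :=
  all (fun z => z \notin S) (internals t) && all (fun z => z \in S) (bleaves t).

Definition rm (e : rel T) (x : T) : rel T := [rel a b | [&& e a b, a != x & b != x]].

Lemma bwf_mono (e e' : rel T) t : subrel e' e -> bwf e' t -> bwf e t.
Proof.
move=> Hs; elim: t => [x|x l IHl r IHr] //= /and4P[H1 H2 H3 H4].
by rewrite !Hs // IHl // IHr.
Qed.

Lemma bwf_restrict (e : rel T) x t : bwf e t -> x \notin blabels t -> bwf (rm e x) t.
Proof.
elim: t => [y|y l IHl r IHr] //= /and4P[H1 H2 H3 H4].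
rewrite in_cons mem_cat !negb_or => /and3P[Hy Hl Hr].
have Hl' : broot l != x by apply: contraNneq Hl => <-; exact: broot_in.
have Hr' : broot r != x by apply: contraNneq Hr => <-; exact: broot_in.
by rewrite /rm /= H1 H2 eq_sym Hy Hl' Hr' IHl // IHr.
Qed.

Lemma notin_labels (e : rel T) u t : bwf (rm e u) t -> broot t != u -> u \notin blabels t.
Proof.
elim: t => [y|y l IHl r IHr] /=; first by rewrite inE eq_sym.
case/and4P => H1 H2 H3 H4 Hy; rewrite in_cons mem_cat !negb_or eq_sym Hy /=.
apply/andP; split.
  apply: IHl => //; apply/eqP => E; by move: H1; rewrite E /rm /= eqxx !andbF.
apply: IHr => //; apply/eqP => E; by move: H2; rewrite E /rm /= eqxx !andbF.
Qed.

Variable e : rel T.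
Variable S : {set T}.

Lemma reachA t y : bwf e t -> okS S t -> y \in blabels t ->
  exists q, [/\ path e (broot t) q, last (broot t) q = y &
                all (fun z => z \notin S) (belast (broot t) q)].
Proof.
elim: t => [x|x l IHl r IHr] /=.
  by rewrite inE => _ _ /eqP->; exists [::].
case/and4P => H1 H2 H3 H4; rewrite /okS /= => /andP[/andP[Hx Hi]].
rewrite !all_cat => Hlv; move: Hi; rewrite all_cat => /andP[Hil Hir].
case/andP: Hlv => Hll Hlr.
rewrite in_cons mem_cat => /orP[/eqP->|/orP[Hy|Hy]]; first by exists [::].
  have [q [Hp Hq Ha]] := IHl H3 (introT andP (conj Hil Hll)) Hy.
  by exists (broot l :: q); rewrite /= H1 Hp Hx Ha.
have [q [Hp Hq Ha]] := IHr H4 (introT andP (conj Hir Hlr)) Hy.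
by exists (broot r :: q); rewrite /= H2 Hp Hx Ha.
Qed.

Lemma reachB t y : bwf e t -> okS S t -> y \in blabels t ->
  exists q, [/\ path e y q, last y q \in S, last y q \in blabels t &
                all (fun z => z \notin S) (belast y q)].
Proof.
elim: t y => [x|x l IHl r IHr] y /=.
  rewrite inE /okS /= andbT => _ Hx /eqP->; exists [::]; by rewrite /= inE eqxx.
case/and4P => H1 H2 H3 H4; rewrite /okS /= => /andP[/andP[Hx Hi]].
rewrite !all_cat => Hlv; move: Hi; rewrite all_cat => /andP[Hil Hir].
case/andP: Hlv => Hll Hlr.
have okl : okS S l by apply/andP.
have okr : okS S r by apply/andP.
rewrite in_cons mem_cat => /orP[/eqP->|/orP[Hy|Hy]].
- have [q [Hp Hq Hl Ha]] := IHl (broot l) H3 okl (broot_in l).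
  exists (broot l :: q); rewrite /= H1 Hp Hx Ha Hq; split => //.
  by rewrite in_cons mem_cat Hl orbT.
- have [q [Hp Hq Hl Ha]] := IHl y H3 okl Hy.
  by exists q; rewrite in_cons mem_cat Hl orbT.
- have [q [Hp Hq Hl Ha]] := IHr y H4 okr Hy.
  by exists q; rewrite in_cons mem_cat Hl !orbT.
Qed.

End Trees.
Section Main.
Variable T : finType.
Variable S : {set T}.

Lemma card_one (a v : T) : v \in S -> (a = v \/ a \notin S) -> #|[set a; v] :&: S| == 1%N.
Proof.
move=> Hv [->|Ha].
  rewrite setUid; have -> : [set v] :&: S = [set v] by apply/setIidPl; rewrite sub1set.
  by rewrite cards1.
have -> : [set a; v] :&: S = [set v].
  apply/setP => z; rewrite !inE; case: (eqVneq z a) => [->|_] /=.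
    rewrite (negbTE Ha); case: (eqVneq a v) => // E; by rewrite E Hv in Ha.
  by case: eqP => [->|]; rewrite ?Hv ?andbT ?andbF.
by rewrite cards1.
Qed.

Lemma wterm_gt0 (e : rel T) u v d : distS e S u v = Some d -> (0 < wterm e S u v)%R.
Proof. by move=> H; rewrite wtermE H mulr_gt0 // exprn_gt0. Qed.

Lemma wterm_self (e : rel T) u : u \in S -> wterm e S u u = 2%R.
Proof.
move=> Hu.
have Hs : Spath e S u u [::].
  by apply/and5P; split => //; apply: card_one => //; left.
have [d Hd Hd0] := Spath_dist Hs.
by rewrite wtermE Hd; move: Hd0; rewrite leqn0 => /eqP->; rewrite expr0 mulr1.
Qed.

Lemma wterm_SS (e : rel T) u v : u \in S -> v \in S -> v != u -> wterm e S u v = 0%R.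
Proof.
move=> Hu Hv Hvu; rewrite wtermE; case E: distS => [d|] //.
have [q [Hq _]] := dist_Spath E.
case/and5P: Hq => _ _ _ Hc _.
have : [set u; v] :&: S = [set u; v].
  by apply/setIidPl; apply/subsetP => w; rewrite !inE => /orP[]/eqP->.
by move=> E2; move: Hc; rewrite E2 cards2 (eq_sym u v) Hvu.
Qed.

Lemma sum_le_weight (e : rel T) u s : uniq s -> {subset s <= S} ->
  (\sum_(v <- s) wterm e S u v <= weight e S u)%R.
Proof.
move=> Hu Hs; rewrite big_uniq // /weight [X in (_ <= X)%R](bigID (fun v => v \in s)) /=.
rewrite -[X in (X <= _)%R]addr0; apply: lerD; last by apply: sumr_ge0 => i _; exact: wterm_ge0.
rewrite le_eqVlt; apply/orP; left; apply/eqP.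
apply: eq_bigl => i /=; case Hi: (i \in s); rewrite ?andbT ?andbF //; by rewrite Hs.
Qed.

Lemma step_ge (e e' : rel T) x y v : subrel e' e -> e x y -> x \notin S -> v \in S ->
  (h * wterm e' S y v <= wterm e S x v)%R.
Proof.
move=> Hsub Hxy Hx Hv.
rewrite [wterm e' _ _ _]wtermE; case E: distS => [d'|]; last by rewrite mulr0 wterm_ge0.
have [q [Hq Hsz]] := dist_Spath E.
have [Hp Hl Ha] := Spath_walk Hq Hv.
have Hp2 : path e x (y :: q) by rewrite /= Hxy (sub_path Hsub Hp).
have [d Hd Hdle] := walk_dist Hp2 Hl Hv (introT andP (conj Hx Ha)).
rewrite wtermE Hd /= -Hsz in Hdle *.
rewrite mulrA (mulrC h) -mulrA -exprS ler_pM2l //; exact: hX_le.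
Qed.

Lemma conv t : forall e : rel T, bwf e t -> uniq (blabels t) -> okS S t ->
  (2 <= \sum_(v <- bleaves t) wterm e S (broot t) v)%R.
Proof.
elim: t => [x|x l IHl r IHr] e /=.
  move=> _ _ /andP[_] /=; rewrite andbT => Hx.
  by rewrite big_seq1 wterm_self.
case/and4P => H1 H2 H3 H4.
move=> /andP[Hxn]; rewrite cat_uniq => /and3P[Ul Hd Ur].
rewrite /okS /= !all_cat => /andP[/andP[Hx /andP[Hil Hir]] /andP[Hll Hlr]].
move: Hxn; rewrite mem_cat negb_or => /andP[Hxl Hxr].
have := IHl (rm e x) (bwf_restrict H3 Hxl) Ul (introT andP (conj Hil Hll)).
have := IHr (rm e x) (bwf_restrict H4 Hxr) Ur (introT andP (conj Hir Hlr)).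
move=> Sr Sl.
have Hsub : subrel (rm e x) e by move=> a b /and3P[].
have Gl : (h * \sum_(v <- bleaves l) wterm (rm e x) S (broot l) v <=
           \sum_(v <- bleaves l) wterm e S x v)%R.
  rewrite mulr_sumr big_seq [X in (_ <= X)%R]big_seq; apply: ler_sum => v Hv.
  apply: step_ge => //; exact: (allP Hll).
have Gr : (h * \sum_(v <- bleaves r) wterm (rm e x) S (broot r) v <=
           \sum_(v <- bleaves r) wterm e S x v)%R.
  rewrite mulr_sumr big_seq [X in (_ <= X)%R]big_seq; apply: ler_sum => v Hv.
  apply: step_ge => //; exact: (allP Hlr).
rewrite big_cat /=; rewrite /h in Gl Gr; lra.
Qed.

Lemma full_ok (e : rel T) u t : full_binary_subtree_at e S u t ->
  okS S t /\ uniq (bleaves t).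
Proof.
case=> _ _ Hu HS.
have Hu2 : uniq (internals t ++ bleaves t) by rewrite -(perm_uniq (perm_labels t)).
have Hlv : forall z, z \in bleaves t -> z \in S.
  move=> z Hz; have : z \in [set x in bleaves t] by rewrite inE.
  by rewrite -HS !inE => /andP[].
split; last by move: Hu2; rewrite cat_uniq => /and3P[].
apply/andP; split; last by apply/allP.
apply/allP => z Hz; apply/negP => HzS.
have Hzl : z \in blabels t by rewrite (perm_mem (perm_labels t)) mem_cat Hz.
have : z \in [set x in bleaves t] by rewrite -HS !inE Hzl HzS.
rewrite inE => Hzv.
move: Hu2; rewrite cat_uniq => /and3P[_ /hasPn Hn _].
by move: (Hn z Hzv) => /=; rewrite Hz.
Qed.

Definition edges (e : rel T) := [set p : T * T | e p.1 p.2].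

Lemma rm_edges (e : rel T) u x : e u x -> (#|edges (rm e u)| < #|edges e|)%N.
Proof.
move=> H.
have Hs : edges (rm e u) \subset edges e :\ (u, x).
  apply/subsetP => [[a b]]; rewrite !inE /= => /and3P[Hab Ha Hb].
  by rewrite Hab andbT xpair_eqE negb_and Ha.
rewrite (cardsD1 (u, x) (edges e)) inE /= H add1n ltnS; exact: subset_leq_card.
Qed.

Lemma rm_deg (e : rel T) u y : (deg (rm e u) y <= deg e y)%N.
Proof. apply: subset_leq_card; apply/subsetP => z; rewrite !inE => /and3P[]. by []. Qed.

Lemma rm_deg_nbr (e : rel T) u x : symmetric e -> e u x -> (deg (rm e u) x < deg e x)%N.
Proof.
move=> Hsym H; rewrite /deg (cardsD1 u [set y | e x y]) inE Hsym H add1n ltnS.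
apply: subset_leq_card; apply/subsetP => z; rewrite !inE => /and3P[H1 H2 H3].
by rewrite H3 H1.
Qed.

Lemma rm_sym (e : rel T) u : symmetric e -> symmetric (rm e u).
Proof. by move=> Hs a b; rewrite /rm /= Hs; case: (b != u); case: (a != u); rewrite ?andbT ?andbF. Qed.

Lemma rm_irr (e : rel T) u : irreflexive e -> irreflexive (rm e u).
Proof. by move=> Hi a; rewrite /rm /= Hi. Qed.

Lemma key (e : rel T) u v : u \notin S -> v \in S -> (0 < wterm e S u v)%R ->
  exists x, e u x /\ (wterm e S u v <= h * wterm (rm e u) S x v)%R.
Proof.
move=> Hu Hv; rewrite wtermE; case E: distS => [d|]; last by rewrite ltxx.
move=> _; have [q [Hq Hsz]] := dist_Spath E.
case/and5P: Hq => Hp /eqP Hl Huq Hc Hall.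
case: q Hp Hl Huq Hc Hall Hsz => [|x q] /=.
  by move=> _ Hl; move: Hu; rewrite Hl Hv.
move=> /andP[Hux Hp] Hl /andP[Hun Huq] Hc Hall Hsz.
exists x; split => //.
have Hsp : Spath (rm e u) S x v q.
  apply/and5P; split => //.
  - apply: (@sub_in_path _ (predC1 u) e (rm e u)).
    + by move=> a b; rewrite !inE => Ha Hb Hab; rewrite /rm /= Hab Ha Hb.
    + by apply/allP => z Hz; rewrite inE; apply: contraNneq Hun => <-.
    + exact: Hp.
  - by rewrite Hl.
  - apply: card_one => //; case: q {Hp Hun Huq Hc Hsz} Hl Hall => [|y q] /=.
      by move=> ->; left.
    by move=> _ /andP[Hx _]; right.
  - apply/allP => z Hz; apply: (allP Hall).
    by case: q {Hp Hun Huq Hc Hsz Hl Hall} Hz => [|y q] //= Hz; rewrite in_cons Hz orbT.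
have [d' Hd' Hle] := Spath_dist Hsp.
rewrite wtermE Hd' -Hsz mulrA (mulrC h) -mulrA -exprS ler_pM2l //; exact: hX_le.
Qed.

Definition Pw (e : rel T) u := (weight e S u <= 2)%R /\
  (weight e S u = 2%R -> exists t, full_binary_subtree_at e S u t).

Lemma h_gt0 : (0 < h)%R. Proof. by rewrite /h invr_gt0. Qed.

Lemma step (e : rel T) u : symmetric e -> irreflexive e -> (deg e u <= 2)%N ->
  (forall x, e u x -> Pw (rm e u) x) -> Pw e u.
Proof.
move=> Hs Hi Hdeg IH.
case Hu: (u \in S).
  have Hw : weight e S u = 2%R.
    rewrite /weight (bigD1 u) //= wterm_self // big1 ?addr0 // => v /andP[Hv Hvu].
    exact: wterm_SS.
  split; first by rewrite Hw.
  move=> _; exists (BLeaf u); split => //.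
  apply/setP => z; rewrite !inE; case: eqP => [->|]; by rewrite ?Hu ?andbT ?andbF.
have Hun : u \notin S by rewrite Hu.
set N := [set x | e u x].
pose a x v := wterm (rm e u) S x v.
have a_ge0 : forall x v, (0 <= a x v)%R by move=> x v; exact: wterm_ge0.
have H1 : forall v, v \in S -> (wterm e S u v <= h * \sum_(x in N) a x v)%R.
  move=> v Hv; case: (ltrP 0 (wterm e S u v)) => Hw.
    have [x [Hx Hle]] := key Hun Hv Hw.
    apply: le_trans Hle _; rewrite ler_pM2l ?h_gt0 // (bigD1 x) ?inE //= lerDl.
    by apply: sumr_ge0 => i _.
  apply: le_trans Hw _; apply: mulr_ge0; first exact: ltW h_gt0.
  by apply: sumr_ge0 => i _.
pose W := (\sum_(x in N) weight (rm e u) S x)%R.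
have Hsum : (weight e S u <= h * W)%R.
  apply: (le_trans (y := (\sum_(v in S) h * \sum_(x in N) a x v)%R)); first by apply: ler_sum.
  by rewrite -mulr_sumr /W /weight exchange_big.
have HN : (#|N| <= 2)%N by [].
have HW : (W <= 2 * #|N|%:R)%R.
  rewrite /W; apply: (le_trans (y := (\sum_(x in N) (2 : rat))%R)); last by rewrite sumr_const mulr_natr.
  apply: ler_sum => x Hx; by case: (IH x); first by rewrite inE in Hx.
have HNr : (#|N|%:R <= 2 :> rat)%R by rewrite (ler_nat rat #|N| 2).
split; first by rewrite /h in Hsum; lra.
move=> Hw2.
have Hn2 : #|N| = 2%N.
  have : (2 <= #|N|%:R :> rat)%R by rewrite /h in Hsum; lra.
  rewrite (ler_nat rat 2 #|N|) => H; apply/eqP; rewrite eqn_leq HN H.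
    by [].
have /cards2P [x1 [x2 [Hne HNe]]] : #|N| == 2%N by rewrite Hn2.
have Hx1 : e u x1.
  have : x1 \in N by rewrite HNe !inE eqxx.
  by rewrite inE.
have Hx2 : e u x2.
  have : x2 \in N by rewrite HNe !inE eqxx orbT.
  by rewrite inE.
have HsN : forall F : T -> rat, (\sum_(x in N) F x = F x1 + F x2)%R.
  by move=> F; rewrite HNe big_setU1 ?inE // big_set1.
have [Hw1 _] := IH x1 Hx1.
have [Hw1' _] := IH x2 Hx2.
have HWe : W = (weight (rm e u) S x1 + weight (rm e u) S x2)%R by rewrite /W HsN.
have Ew1 : weight (rm e u) S x1 = 2%R by rewrite /h in Hsum; lra.
have Ew2 : weight (rm e u) S x2 = 2%R by rewrite /h in Hsum; lra.
have Hz : forall v, v \in S -> wterm e S u v = (h * (a x1 v + a x2 v))%R.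
  have H0 : (\sum_(v in S) (h * \sum_(x in N) a x v - wterm e S u v) = 0)%R.
    rewrite sumrB -mulr_sumr exchange_big /=.
    have -> : (\sum_(j in N) \sum_(i in S) a j i = W)%R by [].
    rewrite HWe Ew1 Ew2 -/(weight e S u) Hw2 /h; lra.
  have Hnn : forall i, i \in S -> (0 <= h * \sum_(x in N) a x i - wterm e S u i)%R.
    move=> i Hii; rewrite subr_ge0; exact: H1.
  move=> v Hv; have := psumr_eq0P Hnn H0 Hv.
  rewrite HsN => H; lra.
have Hdisj : forall v, v \in S -> a x1 v = 0%R \/ a x2 v = 0%R.
  move=> v Hv; have := Hz v Hv; have := a_ge0 x1 v; have := a_ge0 x2 v.
  case: (ltrP 0 (wterm e S u v)) => Hw.
    have [x [Hx Hle]] := key Hun Hv Hw.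
    have : x \in N by rewrite inE.
    rewrite HNe !inE => /orP[]/eqP Ex; rewrite Ex in Hle; rewrite /h in Hle *.
      move=> Hb Ha Heq; right; rewrite /a in Ha Hb Heq *; lra.
    move=> Hb Ha Heq; left; rewrite /a in Ha Hb Heq *; lra.
  move=> Hb Ha Heq; left; rewrite /a in Ha Hb Heq *; rewrite /h in Heq; lra.
have [_ F1] := IH x1 Hx1; have [_ F2] := IH x2 Hx2.
have [t1 Ht1] := F1 Ew1; have [t2 Ht2] := F2 Ew2.
have [ok1 _] := full_ok Ht1; have [ok2 _] := full_ok Ht2.
case: Ht1 => R1 B1 U1 S1; case: Ht2 => R2 B2 U2 S2.
have Hsub : subrel (rm e u) e by move=> p q /and3P[].
have nu1 : u \notin blabels t1.
  apply: notin_labels B1 _; rewrite R1; apply/eqP => E; by rewrite E Hi in Hx1.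
have nu2 : u \notin blabels t2.
  apply: notin_labels B2 _; rewrite R2; apply/eqP => E; by rewrite E Hi in Hx2.
have Hd : forall y, y \in blabels t1 -> y \in blabels t2 -> False.
  move=> y Y1 Y2.
  have [q2 [P2 L2 M2 A2]] := reachB B2 ok2 Y2.
  have [q1 [P1 L1 A1]] := reachA B1 ok1 Y1.
  have [q3 [P3 L3 A3]] := reachA B2 ok2 M2.
  rewrite R1 in P1 L1 A1; rewrite R2 in P3 L3 A3.
  have Wp : path (rm e u) x1 (q1 ++ q2) by rewrite cat_path P1 L1 P2.
  have Wl : last x1 (q1 ++ q2) = last y q2 by rewrite last_cat L1.
  have Wa : all (fun z => z \notin S) (belast x1 (q1 ++ q2)).
    by rewrite belast_cat all_cat A1 L1 A2.
  have [d1 D1 _] := walk_dist Wp Wl L2 Wa.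
  have [d2 D2 _] := @walk_dist _ (rm e u) S x2 q3 (last y q2) P3 L3 L2 A3.
  have G1 := wterm_gt0 D1; have G2 := wterm_gt0 D2.
  case: (Hdisj _ L2) => E; rewrite /a in E; [rewrite E in G1|rewrite E in G2];
    by rewrite ltxx in G1 G2.
exists (BNode u t1 t2); split => //.
- by rewrite /= R1 R2 Hx1 Hx2 (bwf_mono Hsub B1) (bwf_mono Hsub B2).
- rewrite /= mem_cat negb_or nu1 nu2 cat_uniq U1 U2 /= andbT.
  by apply/hasPn => y Y2; apply/negP => Y1; exact: (Hd y Y1 Y2).
- apply/setP => z; have /setP /(_ z) E1 := S1; have /setP /(_ z) E2 := S2.
  have Lb : blabels (BNode u t1 t2) = u :: blabels t1 ++ blabels t2 by [].
  have Lv : bleaves (BNode u t1 t2) = bleaves t1 ++ bleaves t2 by [].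
  rewrite !inE in E1 E2; rewrite Lb Lv !inE !mem_cat -E1 -E2.
  case: (eqVneq z u) => [->|_] /=; first by rewrite Hu !andbF.
  by rewrite andb_orl.
Qed.

Lemma main n : forall e : rel T, (#|edges e| <= n)%N -> symmetric e -> irreflexive e ->
  (forall x, deg e x <= 3)%N -> forall u, (deg e u <= 2)%N -> Pw e u.
Proof.
elim: n => [|n IH] e He Hs Hi Hm u Hu; apply: step => // x Hx.
  by move: (rm_edges Hx); rewrite leqn0 in He; rewrite (eqP He).
apply: IH.
- rewrite -ltnS; exact: leq_trans (rm_edges Hx) He.
- exact: rm_sym.
- exact: rm_irr.
- move=> y; exact: leq_trans (rm_deg _ _ _) (Hm y).
- rewrite -ltnS; exact: leq_trans (rm_deg_nbr Hs Hx) (Hm x).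
Qed.

End Main.

Theorem lemma1 (T : finType) (e : rel T) (e_sym : symmetric e)
  (e_irr : irreflexive e) (maxdeg : forall x : T, deg e x <= 3)
  (S : {set T}) (u : T) (deg_u : deg e u <= 2) :
  (weight e S u <= 2)%R /\
  (weight e S u = (2 : rat) <-> exists t : btree T, full_binary_subtree_at e S u t).
Proof.
have [Hle Hfw] := main S (leqnn #|edges e|) e_sym e_irr maxdeg deg_u.
split => //; split => // [[t Ht]].
have [ok Ul] := full_ok Ht.
case: Ht => R B U HS.
have := conv B U ok; rewrite R => Hc.
have Hsub : {subset bleaves t <= S}.
  by move=> z Hz; case/andP: ok => _ /allP; apply.
have := sum_le_weight e u Ul Hsub.
move=> H2; lra.
Qed.
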